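(* Let $K$ be a field of characteristic zero, let $G$ be a subgroup of the additive group of $K$, and let $W_G$ be the Lie algebra with basis $\{e_\alpha : \alpha \in G\}$ and bracket $[e_\alpha, e_\beta] = (\beta-\alpha)e_{\alpha+\beta}$. Then: (a) there is no decomposition of $W_G$ as a direct sum of vector spaces $W_G = A \oplus B$ with $A, B \neq 0$, $[[A,A],B] = 0$ and $[[B,B],A] = 0$; and (b) there are no nonzero subspaces $A \subseteq B$ of $W_G$ with $\dim A + \dim B = \dim W_G$, $[[A,A],B] = 0$ and $[[B,B],A] = 0$. *)

(* Defs.v *)
From HB Require Import structures.
From mathcomp Require Import all_boot all_order all_algebra.
From mathcomp Require Import boolp classical_sets functions cardinality fsbigop.
Set Implicit Arguments. Unset Strict Implicit. Unset Printing Implicit Defensive.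
Import Order.TTheory GRing.Theory Num.Theory.
Local Open Scope classical_set_scope.
Local Open Scope ring_scope.

Section WittG.
Variable K : fieldType.

Definition is_add_subgroup (G : set K) : Prop :=
  G 0 /\ (forall x y, G x -> G y -> G (x - y)).

(* W_G: vectors sum_alpha c_alpha e_alpha are represented by their
   coefficient functions c : K -> K, finitely supported inside G.
   e_alpha is the indicator function of alpha. *)
Definition WG (G : set K) : set (K -> K) :=
  [set f | finite_set (f @^-1` [set~ 0]) /\ (forall x, f x != 0 -> G x)].

Definition e_ (a : K) : K -> K := fun x => if x == a then 1 else 0.

(* Bracket extending [e_a, e_b] = (b - a) e_(a+b) bilinearly:
   [f,g](c) = sum_(a + b = c) f a * g b * (b - a). *)
Definition lie_bracket (f g : K -> K) : K -> K :=
  fun c => \sum_(a \in [set: K]) (f a * g (c - a) * ((c - a) - a)).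

Definition span (S : set (K -> K)) : set (K -> K) :=
  [set v | exists (n : nat) (u : 'I_n -> K -> K) (c : 'I_n -> K),
     (forall i, S (u i)) /\ (forall x, v x = \sum_(i < n) c i * u i x)].

Definition bracket_space (S T : set (K -> K)) : set (K -> K) :=
  span [set v | exists s t, S s /\ T t /\ v = lie_bracket s t].

Definition is_zero_space (S : set (K -> K)) : Prop :=
  forall v, S v -> forall x, v x = 0.

Definition nonzero_space (S : set (K -> K)) : Prop :=
  exists v, S v /\ exists x, v x != 0.

Definition subspace_of (G : set K) (A : set (K -> K)) : Prop :=
  A `<=` WG G /\ A (fun _ => 0) /\
  (forall u v, A u -> A v -> A (fun x => u x + v x)) /\
  (forall (k : K) u, A u -> A (fun x => k * u x)).

Definition lin_indep (I : Type) (b : I -> K -> K) : Prop :=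
  forall (n : nat) (idx : 'I_n -> I) (c : 'I_n -> K), injective idx ->
    (forall x, \sum_(i < n) c i * b (idx i) x = 0) -> forall i, c i = 0.

Definition is_basis (A : set (K -> K)) (I : Type) (b : I -> K -> K) : Prop :=
  (forall i, A (b i)) /\ lin_indep b /\ A `<=` span (range b).

(* dim A + dim B = dim W (cardinal arithmetic): bases of A, B, W indexed by
   IA, IB, IW with a bijection IA + IB -> IW. *)
Definition dim_sum_eq (A B W : set (K -> K)) : Prop :=
  exists (IA IB IW : Type) (bA : IA -> K -> K) (bB : IB -> K -> K)
         (bW : IW -> K -> K) (h : IA + IB -> IW),
    is_basis A bA /\ is_basis B bB /\ is_basis W bW /\ bijective h.

Definition direct_sum_decomp (G : set K) (A B : set (K -> K)) : Prop :=
  subspace_of G A /\ subspace_of G B /\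
  (forall v, A v -> B v -> forall x, v x = 0) /\
  (forall w, WG G w -> exists a b, A a /\ B b /\ forall x, w x = a x + b x).

End WittG.

(* Main.v *)
Require Import Defs.
From HB Require Import structures.
From mathcomp Require Import all_boot all_order all_algebra.
From mathcomp Require Import boolp classical_sets functions cardinality fsbigop.
From mathcomp Require Import finmap.
From mathcomp Require Import ring.
Set Implicit Arguments. Unset Strict Implicit. Unset Printing Implicit Defensive.
Import Order.TTheory GRing.Theory Num.Theory.
Local Open Scope classical_set_scope.
Local Open Scope ring_scope.

Section Main.
Variable K : fieldType.
Hypothesis hK : [pchar K] =i pred0.

Definition supp (f : K -> K) : set K := f @^-1` [set~ 0].
Definition fin (f : K -> K) := finite_set (supp f).
Definition sX (f : K -> K) : {fset K} := fset_set (supp f).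

Lemma sXP f : fin f -> forall i, (i \in sX f) = (f i != 0).
Proof.
move=> ff i; rewrite /sX in_fset_set //.
apply/idP/idP => H; [by move: (set_mem H) => /eqP | by apply: mem_set; apply/eqP].
Qed.

Lemma sX0 f : fin f -> forall i, i \notin sX f -> f i = 0.
Proof. by move=> ff i; rewrite sXP // negbK => /eqP. Qed.

Lemma brE f g c : fin f ->
  lie_bracket f g c = \sum_(a <- sX f) f a * g (c - a) * ((c - a) - a).
Proof.
move=> ff; rewrite /lie_bracket (fsbigTE (sX f)) //.
by move=> i /(sX0 ff) ->; rewrite !mul0r.
Qed.

Lemma br_antisym f g c : fin f ->
  lie_bracket g f c = - lie_bracket f g c.
Proof.
move=> ff; rewrite /lie_bracket (reindex_fsbigT (fun a => c - a)); last first.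
  by exists (fun a => c - a) => a; rewrite opprB addrC subrK.
rewrite (eq_fsbigr (fun a => - (f a * g (c - a) * ((c - a) - a)))); last first.
  move=> a _; have -> : c - (c - a) = a by rewrite opprB addrC subrK.
  ring.
rewrite (fsbigTE (sX f)); last by move=> i /(sX0 ff) ->; rewrite !mul0r oppr0.
rewrite (fsbigTE (sX f)); last by move=> i /(sX0 ff) ->; rewrite !mul0r.
by rewrite sumrN.
Qed.

Lemma nat_neq0 n : n != 0%N -> (n%:R : K) != 0.
Proof. by move=> n0; move/pcharf0P: hK => ->. Qed.

Lemma br_self f c : fin f -> lie_bracket f f c = 0.
Proof.
move=> ff; have := @br_antisym f f c ff => /eqP; rewrite -subr_eq0 opprK -mulr2n.
by rewrite -mulr_natr mulf_eq0 (negbTE (nat_neq0 (n:=2) isT)) orbF => /eqP.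
Qed.

Lemma br_lin f g h k c : fin f ->
  lie_bracket f (fun t => g t - k * h t) c = lie_bracket f g c - k * lie_bracket f h c.
Proof.
move=> ff; rewrite !brE // mulr_sumr -sumrB; apply: eq_bigr => a _.
ring.
Qed.

Lemma br_fin f g : fin f -> fin g -> fin (lie_bracket f g).
Proof.
move=> ff fg; apply: (sub_finite_set _ (finite_seq [seq a + b | a <- sX f, b <- sX g])).
move=> c; rewrite /supp /preimage /= => /eqP; rewrite brE // => H.
apply: contraPP H => Hc; apply/negP; rewrite negbK; apply/eqP.
apply: big1_seq => a /andP[_ Ha].
case: (eqVneq (g (c - a)) 0) => [->|gc]; first by rewrite mulr0 mul0r.
case: Hc; apply/allpairsP; exists (a, c - a) => /=.
by rewrite Ha sXP // gc addrC subrK.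
Qed.



Definition cone (C : set K) := ~ C 0 /\ (forall x y, C x -> C y -> C (x + y)).

Definition ext (M : set K) (z : K) : set K :=
  [set y | M y \/ exists n p, (p = 0 \/ M p) /\ y = p + n.+1%:R * z].

Lemma ext_add M z : (forall x y, M x -> M y -> M (x + y)) ->
  forall x y, ext M z x -> ext M z y -> ext M z (x + y).
Proof.
move=> Madd x y [Mx|[n [p [Hp ->]]]] [My|[m [q [Hq ->]]]].
- by left; apply: Madd.
- right; exists m, (x + q); split; last by rewrite addrA.
  by right; case: Hq => [->|Mq]; [rewrite addr0|apply: Madd].
- right; exists n, (p + y); split; last by rewrite addrAC.
  by right; case: Hp => [->|Mp]; [rewrite add0r|apply: Madd].
- right; exists (n + m.+1)%N, (p + q); split.
    case: Hp => [->|Mp]; first by rewrite add0r.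
    by case: Hq => [->|Mq]; [rewrite addr0; right|right; apply: Madd].
  by rewrite (_ : ((n + m.+1).+1 = n.+1 + m.+1)%N) // natrD; ring.
Qed.

Lemma cone_mul (M : set K) (p : K) n : (forall x y, M x -> M y -> M (x + y)) -> M p ->
  M (n.+1%:R * p).
Proof.
move=> Madd Mp; elim: n => [|n IH]; first by rewrite mul1r.
by rewrite -addn1 natrD mulrDl mul1r; apply: Madd.
Qed.

Lemma exists_order : exists P : set K, cone P /\ forall x, x != 0 -> P x \/ P (- x).
Proof.
have [|M [[M0 Madd] Mmax]] := @Zorn_bigcup K cone.
  move=> F FC Ftot; split.
    by move=> [X FX X0]; case: (FC X FX).
  move=> x y [X FX Xx] [Y FY Yy].
  case: (Ftot X Y FX FY) => [XY|YX].
    by exists Y => //; case: (FC Y FY) => _; apply; [apply: XY|].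
  by exists X => //; case: (FC X FX) => _; apply; [|apply: YX].
exists M; split; first by [].
move=> x x0; apply: contrapT => Hn.
have Hx : ~ M x by move=> Mx; apply: Hn; left.
have Hnx : ~ M (- x) by move=> Mx; apply: Hn; right.
have ext0 z : ~ M z -> ext M z 0.
  move=> Mz; apply: contrapT => e0; apply: (Mmax (ext M z)).
    split; first by move=> y My; left.
    move=> sub; apply: Mz; apply: sub.
    by right; exists 0%N, 0; split; [left|rewrite add0r mul1r].
  by split => //; apply: ext_add.
case: (ext0 x Hx) => [//|[n [p [Hp e1]]]].
case: (ext0 (- x) Hnx) => [//|[m [q [Hq e2]]]].
have Hnz k : (k.+1%:R : K) * x != 0 by rewrite mulf_eq0 negb_or nat_neq0.
case: Hp => [p0|Mp]; first by move: (Hnz n) e1; rewrite p0 add0r => /eqP H /esym.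
case: Hq => [q0|Mq].
  by move: (Hnz m) e2; rewrite q0 add0r mulrN => /eqP H /eqP; rewrite eq_sym oppr_eq0 => /eqP.
apply: M0; have -> : 0 = m.+1%:R * p + n.+1%:R * q.
  have -> : p = - (n.+1%:R * x) by apply/eqP; rewrite -addr_eq0 -e1.
  have -> : q = m.+1%:R * x by apply/eqP; rewrite -subr_eq0 -mulrN -e2.
  ring.
by apply: (Madd); apply: cone_mul.
Qed.

Section Ord.
Variable P : set K.
Hypothesis P0 : ~ P 0.
Hypothesis Padd : forall x y, P x -> P y -> P (x + y).
Hypothesis Ptot : forall x, x != 0 -> P x \/ P (- x).

Lemma list_max (s : seq K) : s != [::] ->
  exists2 m, m \in s & forall y, y \in s -> y = m \/ P (m - y).
Proof.
elim: s => [//|a s IH] _.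
case: (eqVneq s [::]) => [->|sn].
  by exists a; rewrite ?inE ?eqxx // => y; rewrite inE => /eqP ->; left.
case: (IH sn) => m ms Hm.
case: (eqVneq a m) => [->|am].
  by exists m; rewrite ?inE ?eqxx // => y; rewrite inE => /orP[/eqP->|/Hm]; [left|].
case: (Ptot (x := m - a)); first by rewrite subr_eq0 eq_sym.
  move=> Pma; exists m; first by rewrite inE ms orbT.
  by move=> y; rewrite inE => /orP[/eqP->|/Hm]; [right|].
move=> Pam; exists a; first by rewrite inE eqxx.
move=> y; rewrite inE => /orP[/eqP->|/Hm [->|Pmy]]; [by left|by right; rewrite -opprB|].
right; have -> : a - y = (m - y) + - (m - a) by ring.
by apply: Padd.
Qed.


Lemma lead x y s t : fin x -> fin y ->
  s \in sX x -> (forall a, a \in sX x -> a = s \/ P (s - a)) ->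
  t \in sX y -> (forall b, b \in sX y -> b = t \/ P (t - b)) ->
  (forall c, lie_bracket x y c = 0) -> s = t.
Proof.
move=> fx fy sx Hs ty Ht H0.
have := H0 (s + t); rewrite brE // (bigD1_seq s) //= big1_seq.
  rewrite addr0 (addrC s t) addrK => /eqP; rewrite !mulf_eq0.
  move: sx ty; rewrite !sXP // => /negbTE-> /negbTE-> /=; rewrite subr_eq0 => /eqP e; by rewrite e.
move=> a /andP[asn ax]; case: (eqVneq (y (s + t - a)) 0) => [->|ya].
  by rewrite mulr0 mul0r.
exfalso; case: (Hs a ax) => [e|Psa]; first by rewrite e eqxx in asn.
rewrite -sXP // in ya; case: (Ht _ ya) => [e|Pt].
  move/eqP: asn; apply; have -> : a = s + t - (s + t - a) by ring.
  by rewrite e; ring.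
apply: P0; have -> : 0 = (s - a) + (t - (s + t - a)) by ring.
by apply: Padd.
Qed.

Lemma has_max f : fin f -> (exists c, f c != 0) ->
  exists2 s, s \in sX f & forall a, a \in sX f -> a = s \/ P (s - a).
Proof.
move=> ff [c fc]; apply: list_max; apply/eqP => e.
have : c \in enum_fset (sX f) by rewrite -sXP in fc.
by rewrite e.
Qed.

Lemma centr x y : fin x -> (exists c, x c != 0) -> fin y ->
  (forall c, lie_bracket x y c = 0) -> exists k, forall t, y t = k * x t.
Proof.
move=> fx nx fy H0; case: (has_max fx nx) => s sx Hs.
pose k := y s / x s; pose y' := fun t => y t - k * x t.
have fy' : fin y'.
  have fU : finite_set (supp y `|` supp x) by rewrite finite_setU.
  apply: (sub_finite_set _ fU).
  move=> t; rewrite /supp /preimage /= => yt; apply: contrapT => /not_orP[a b].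
  have ya : y t = 0 by apply: contrapT. have xa : x t = 0 by apply: contrapT.
  apply: yt; rewrite /y' ya xa.
  by rewrite mulr0 subr0.
have H0' : forall c, lie_bracket x y' c = 0.
  by move=> c; rewrite br_lin // H0 br_self // mulr0 subr0.
case: (pselect (exists c, y' c != 0)) => [ny'|].
  case: (has_max fy' ny') => t ty Ht.
  have st := lead fx fy' sx Hs ty Ht H0'.
  move: ty; rewrite -st sXP // /y' /k divfK; first by rewrite subrr eqxx.
  by rewrite -sXP.
move=> H; exists k => t; apply/eqP; rewrite -subr_eq0; apply/eqP.
by apply: contrapT => Hn; apply: H; exists t; apply/eqP.
Qed.
End Ord.

Definition inspan m (v : 'I_m -> K -> K) (w : K -> K) :=
  exists d : 'I_m -> K, forall x, w x = \sum_(j < m) d j * v j x.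

Lemma LA n m (u : 'I_n -> K -> K) (v : 'I_m -> K -> K) : (m < n)%N ->
  (forall i, inspan v (u i)) ->
  exists z : 'I_n -> K, (exists i, z i != 0) /\ forall x, \sum_(i < n) z i * u i x = 0.
Proof.
move=> mn Hu; have [D HD] := choice Hu.
pose M : 'M[K]_(n, m) := \matrix_(i, j) D i j.
have kn : kermx M != 0.
  rewrite -mxrank_eq0 mxrank_ker subn_eq0 -ltnNge.
  by apply: leq_ltn_trans (rank_leq_col M) mn.
have [i0 ri0] : exists i0, row i0 (kermx M) != 0.
  apply: contrapT => Hn; case/negP: kn; apply/eqP/row_matrixP => i.
  by rewrite row0; apply/eqP; apply: contrapT => Hi; apply: Hn; exists i; apply/negP.
have [j0 rj0] : exists j0, kermx M i0 j0 != 0.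
  apply: contrapT => Hn; case/negP: ri0; apply/eqP/rowP => j.
  rewrite [X in X = _]mxE [X in _ = X]mxE; apply/eqP; apply: contrapT => Hj; apply: Hn; exists j.
  exact/negP.
exists (fun j => kermx M i0 j); split; first by exists j0.
move=> x; under eq_bigr => i _ do rewrite HD mulr_sumr.
rewrite exchange_big /=; apply: big1 => j _.
have : (row i0 (kermx M) *m M) 0 j = 0 by rewrite -row_mul mulmx_ker row0 mxE.
rewrite mxE => e.
rewrite (eq_bigr (fun i => (row i0 (kermx M) 0 i * M i j) * v j x)).
  by rewrite -mulr_suml e mul0r.
by move=> i _; rewrite !mxE mulrA.
Qed.

Lemma inspan_ext m (v : 'I_m -> K -> K) w w' : (forall x, w x = w' x) ->
  inspan v w' -> inspan v w.
Proof. by move=> e [d Hd]; exists d => x; rewrite e Hd. Qed.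

Lemma inspan_one m (v : 'I_m -> K -> K) j : inspan v (v j).
Proof.
exists (fun l => (l == j)%:R) => x; rewrite (bigD1 j) //= eqxx mul1r big1 ?addr0 //.
by move=> i /negbTE ->; rewrite mul0r.
Qed.

Lemma inspan0 m (v : 'I_m -> K -> K) : inspan v (fun _ => 0).
Proof. by exists (fun _ => 0) => x; rewrite big1 // => i _; rewrite mul0r. Qed.

Lemma span_inspan (S : set (K -> K)) m (v : 'I_m -> K -> K) w :
  (forall s, S s -> inspan v s) -> Defs.span S w -> inspan v w.
Proof.
move=> HS [n [u [c [Su Hw]]]].
have [D HD] := choice (fun i => HS _ (Su i)).
exists (fun j => \sum_(i < n) c i * D i j) => x; rewrite Hw.
under eq_bigr => i _ do rewrite HD mulr_sumr.
rewrite exchange_big /=; apply: eq_bigr => j _; rewrite mulr_suml.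
by apply: eq_bigr => i _; rewrite mulrA.
Qed.

Definition catv m1 m2 (v1 : 'I_m1 -> K -> K) (v2 : 'I_m2 -> K -> K) :
  'I_(m1 + m2) -> K -> K :=
  fun l => match fintype.split l with inl i => v1 i | inr j => v2 j end.

Lemma inspan_add m1 m2 (v1 : 'I_m1 -> K -> K) (v2 : 'I_m2 -> K -> K) w1 w2 :
  inspan v1 w1 -> inspan v2 w2 -> inspan (catv v1 v2) (fun x => w1 x + w2 x).
Proof.
move=> [d1 H1] [d2 H2].
exists (fun l => match fintype.split l with inl i => d1 i | inr j => d2 j end) => x.
rewrite big_split_ord H1 H2 /catv; congr (_ + _); apply: eq_bigr => i _.
  by rewrite (unsplitK (inl _ i) : fintype.split (lshift m2 i) = inl i).
by rewrite (unsplitK (inr _ i) : fintype.split (rshift m1 i) = inr i).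
Qed.

Lemma inspan_l m1 m2 (v1 : 'I_m1 -> K -> K) (v2 : 'I_m2 -> K -> K) w :
  inspan v1 w -> inspan (catv v1 v2) w.
Proof.
move=> H; apply: (inspan_ext (w' := fun x => w x + 0)); first by move=> x; rewrite addr0.
by apply: inspan_add => //; apply: inspan0.
Qed.

Lemma inspan_r m1 m2 (v1 : 'I_m1 -> K -> K) (v2 : 'I_m2 -> K -> K) w :
  inspan v2 w -> inspan (catv v1 v2) w.
Proof.
move=> H; apply: (inspan_ext (w' := fun x => 0 + w x)); first by move=> x; rewrite add0r.
by apply: inspan_add => //; apply: inspan0.
Qed.

Definition pairv (a b : K -> K) : 'I_2 -> K -> K := fun l => if l == ord0 then a else b.

Lemma inspan_pair a b w mu nu : (forall x, w x = mu * a x + nu * b x) ->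
  inspan (pairv a b) w.
Proof.
move=> H; exists (fun l => if l == ord0 then mu else nu) => x.
by rewrite big_ord_recl big_ord1 /= H.
Qed.

Lemma inspan_single b w k : (forall x, w x = k * b x) ->
  inspan (fun _ : 'I_1 => b) w.
Proof. by move=> H; exists (fun _ => k) => x; rewrite big_ord1 H. Qed.

Lemma natr_inj (i j : nat) : (i%:R : K) = j%:R -> i = j.
Proof.
wlog ij : i j / (i <= j)%N.
  by move=> W e; case: (leqP i j) => [/W|/ltnW /W]; [apply| move=> W2; apply/esym/W2].
move=> e; have h : ((j - i)%N%:R : K) = 0 by rewrite natrB // e subrr.
case E: (j - i)%N => [|k].
  by apply/eqP; rewrite eqn_leq ij /= -subn_eq0 E.
by move: (@nat_neq0 k.+1 isT); rewrite -E h eqxx.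
Qed.

Lemma card_bound (I : Type) (b : I -> K -> K) m (v : 'I_m -> K -> K) n
  (idx : 'I_n -> I) : lin_indep b -> injective idx ->
  (forall i, inspan v (b i)) -> (n <= m)%N.
Proof.
move=> li inj Hb; rewrite leqNgt; apply/negP => mn.
have [z [[i0 zi0] Hz]] := LA (u := fun i => b (idx i)) mn (fun i => Hb (idx i)).
by move: zi0; rewrite (li n idx z inj Hz i0) eqxx.
Qed.

Lemma fin_range (I : Type) (g : I -> K -> K) :
  (forall idx : 'I_3 -> I, injective idx -> False) ->
  exists v : 'I_2 -> K -> K, forall i, exists j, g i = v j.
Proof.
move=> no3.
case: (pselect (exists i0 : I, True)) => [[i0 _]|no]; last first.
  by exists (fun _ _ => 0); move=> i; exfalso; apply: no; exists i.
case: (pselect (exists i1, i1 <> i0)) => [[i1 n10]|all0]; last first.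
  exists (fun _ => g i0) => i; exists ord0; congr g.
  by apply: contrapT => h; apply: all0; exists i.
case: (pselect (exists i2, i2 <> i0 /\ i2 <> i1)) => [[i2 [n20 n21]]|all01].
  exfalso; apply: (no3 (fun k : 'I_3 => if val k == 0%N then i0 else if val k == 1%N then i1 else i2)).
  move=> [[|[|[|k1]]] h1] [[|[|[|k2]]] h2] //= e; apply: val_inj => //=.
  all: try (by exfalso; apply: n10). all: try (by exfalso; apply: n10; apply/esym).
  all: try (by exfalso; apply: n20). all: try (by exfalso; apply: n20; apply/esym).
  all: try (by exfalso; apply: n21). all: try (by exfalso; apply: n21; apply/esym).
exists (pairv (g i0) (g i1)) => i.
case: (pselect (i = i0)) => [->|ni0]; first by exists ord0.
exists ord_max; rewrite /pairv /=; congr g.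
by apply: contrapT => h; apply: all01; exists i.
Qed.

Lemma fin_lin f g k : fin f -> fin g -> fin (fun t => f t - k * g t).
Proof.
move=> ff fg; have fU : finite_set (supp f `|` supp g) by rewrite finite_setU.
apply: (sub_finite_set _ fU).
move=> t; rewrite /supp /preimage /= => yt; apply: contrapT => /not_orP[a b].
have ya : f t = 0 by apply: contrapT. have xa : g t = 0 by apply: contrapT.
by apply: yt; rewrite ya xa mulr0 subr0.
Qed.

Lemma span1 (S : set (K -> K)) v : S v -> Defs.span S v.
Proof.
move=> Sv; exists 1%N, (fun _ => v), (fun _ => 1); split => // x.
by rewrite big_ord1 mul1r.
Qed.

Lemma zero_br3 (A B : set (K -> K)) :
  is_zero_space (bracket_space (bracket_space A A) B) ->
  forall a1 a2 b, A a1 -> A a2 -> B b ->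
  forall c, lie_bracket (lie_bracket a1 a2) b c = 0.
Proof.
move=> Z a1 a2 b A1 A2 Bb c; apply: Z; apply: span1.
exists (lie_bracket a1 a2), b; split => //; apply: span1.
by exists a1, a2.
Qed.

Variable G : set K.
Hypothesis hG : is_add_subgroup G.

Lemma G_nat g : G g -> forall i : nat, G (i%:R * g).
Proof.
case: hG => G0 Gsub Gg; elim => [|i IH]; first by rewrite mul0r.
have -> : (i.+1%:R * g) = i%:R * g - (0 - g) by rewrite -addn1 natrD; ring.
by apply: (Gsub) => //; apply: (Gsub).
Qed.

Lemma WG_fin w : WG G w -> fin w.
Proof. by case. Qed.

Lemma e_WG a : G a -> WG G (e_ a).
Proof.
move=> Ga; split.
  apply: (sub_finite_set _ (finite_seq [:: a])) => x hx.
  have xa : x = a.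
    apply: contrapT => hn; apply: hx; rewrite /e_.
    by case E: (x == a) => //; move: E => /eqP.
  by rewrite xa /= inE eqxx.
move=> x; rewrite /e_; case E: (x == a); last by rewrite eqxx.
by move: E => /eqP ->.
Qed.

Lemma W_big g m (v : 'I_m -> K -> K) : G g -> g != 0 ->
  (forall w, WG G w -> inspan v w) -> False.
Proof.
move=> Gg g0 HW.
have [z [[i0 zi0] Hz]] := LA (u := fun i : 'I_m.+1 => e_ (i%:R * g)) (ltnSn m)
   (fun i => HW _ (e_WG (G_nat Gg i))).
move: (Hz (i0%:R * g)); rewrite (bigD1 i0) //= big1.
  by rewrite /e_ eqxx mulr1 addr0 => e; rewrite e eqxx in zi0.
move=> i ni; rewrite /e_; case: eqP => [e|]; last by rewrite mulr0.
exfalso; move/eqP: ni; apply; apply: val_inj; apply: natr_inj.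
by apply: (mulIf g0); rewrite e.
Qed.

Lemma W_G0 : (forall x, G x -> x = 0) ->
  forall w, WG G w -> inspan (fun _ : 'I_1 => e_ 0) w.
Proof.
move=> G0 w [_ Hw]; apply: (inspan_single (k := w 0)) => x; rewrite /e_.
case: eqP => [->|nx]; first by rewrite mulr1.
rewrite mulr0; apply/eqP; apply: contrapT => /negP nz; apply: nx; apply: G0; apply: Hw.
exact: nz.
Qed.

Section Ord2.
Variable P : set K.
Hypothesis P0 : ~ P 0.
Hypothesis Padd : forall x y, P x -> P y -> P (x + y).
Hypothesis Ptot : forall x, x != 0 -> P x \/ P (- x).

Let cz x y : fin x -> (exists c, x c != 0) -> fin y ->
  (forall c, lie_bracket x y c = 0) -> exists k, forall t, y t = k * x t.
Proof. exact: (@centr P P0 Padd Ptot). Qed.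

Lemma two_dim (a r : K -> K) (S : set (K -> K)) : fin a -> (exists c, a c != 0) ->
  (forall s, S s -> fin s) ->
  (forall s, S s -> exists l, forall t, lie_bracket a s t = l * r t) ->
  exists v : 'I_2 -> K -> K, forall s, S s -> inspan v s.
Proof.
move=> fa na fS HS.
case: (pselect (exists s0, S s0 /\ exists t, lie_bracket a s0 t != 0)); last first.
  move=> H; exists (pairv a a) => s Ss.
  have [k Hk] : exists k, forall t, s t = k * a t.
    apply: cz => //; first exact: fS.
    move=> c; apply: contrapT => h; apply: H; exists s; split => //.
    by exists c; apply/eqP.
  by apply: (inspan_pair (mu := k) (nu := 0)) => x; rewrite Hk mul0r addr0.
move=> [s0 [Ss0 [t0 nz]]]; exists (pairv a s0) => s Ss.
have [l0 H0] := HS _ Ss0; have [l Hl] := HS _ Ss.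
have l00 : l0 != 0 by apply: contraNneq nz => e; rewrite H0 e mul0r.
have [k Hk] : exists k, forall t, (s t - l / l0 * s0 t) = k * a t.
  apply: (cz (y := fun t => s t - l / l0 * s0 t)) => //; first by apply: fin_lin; apply: fS.
  move=> c; rewrite br_lin // Hl H0 mulrA divfK //; by rewrite subrr.
apply: (inspan_pair (mu := k) (nu := l / l0)) => x.
by rewrite -Hk subrK.
Qed.

Lemma partA_half (A B : set (K -> K)) : A `<=` WG G -> B `<=` WG G ->
  (forall w, WG G w -> exists a b, A a /\ B b /\ forall x, w x = a x + b x) ->
  (forall a1 a2 b', A a1 -> A a2 -> B b' -> forall c,
      lie_bracket (lie_bracket a1 a2) b' c = 0) ->
  forall a b, A a -> (exists c, a c != 0) -> B b -> (exists c, b c != 0) ->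
  (forall b', B b' -> exists k, forall t, b' t = k * b t) ->
  forall g, G g -> g != 0 -> False.
Proof.
move=> AW BW sum HAB a b Aa na Bb nb HB g Gg g0.
have fa := WG_fin (AW _ Aa); have fb := WG_fin (BW _ Bb).
have [vA HvA] : exists v : 'I_2 -> K -> K, forall s, A s -> inspan v s.
  apply: (@two_dim a b) => //; first by move=> s Ss; apply: WG_fin; apply: AW.
  move=> s Ss; have fs := WG_fin (AW _ Ss).
  apply: cz => //; first exact: br_fin.
  by move=> c; rewrite br_antisym ?HAB ?oppr0 //; apply: br_fin.
apply: (@W_big g _ (catv vA (fun _ : 'I_1 => b)) Gg g0) => w Ww.
have [a' [b' [Aa' [Bb' Hw]]]] := sum w Ww.
apply: (inspan_ext Hw); apply: inspan_add; first exact: HvA.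
by have [k Hk] := HB b' Bb'; exact: inspan_single Hk.
Qed.

Lemma basis_ne (A : set (K -> K)) (I : Type) (b : I -> K -> K) :
  is_basis A b -> nonzero_space A -> exists i : I, True.
Proof.
move=> [_ [_ sp]] [a [Aa [x ax]]].
have [n [u [c [Su Hw]]]] := sp a Aa.
case: n u c Su Hw => [|n] u c Su Hw.
  by move: ax; rewrite Hw big_ord0 eqxx.
by case: (Su ord0) => i _ _; exists i.
Qed.

Lemma partB (A B : set (K -> K)) : subspace_of G A -> subspace_of G B ->
  A `<=` B -> nonzero_space A -> nonzero_space B -> dim_sum_eq A B (WG G) ->
  (forall b1 b2 a, B b1 -> B b2 -> A a -> forall c,
      lie_bracket (lie_bracket b1 b2) a c = 0) -> False.
Proof.
move=> [AW _] [BW _] AB nA nB [IA [IB [IW [bA [bB [bW [h [bAs [bBs [bWs hb]]]]]]]]]] HBA.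
have [a [Aa na]] := nA.
have fa := WG_fin (AW _ Aa).
have [vB HvB] : exists v : 'I_2 -> K -> K, forall s, B s -> inspan v s.
  apply: (@two_dim a a) => //; first by move=> s Ss; apply: WG_fin; apply: BW.
  move=> s Ss; have fs := WG_fin (BW _ Ss).
  apply: cz => //; first exact: br_fin.
  by move=> c; rewrite br_antisym ?HBA ?oppr0 //; [apply: AB | apply: br_fin].
have noA : forall idx : 'I_3 -> IA, injective idx -> False.
  move=> idx inj; have := card_bound (v := vB) bAs.2.1 inj.
  by move=> /(_ (fun i => HvB _ (AB _ (bAs.1 i)))).
have noB : forall idx : 'I_3 -> IB, injective idx -> False.
  move=> idx inj; have := card_bound (v := vB) bBs.2.1 inj.
  by move=> /(_ (fun i => HvB _ (bBs.1 i))).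
have [hi hK1 hK2] := hb.
case: (pselect (exists g, G g /\ g != 0)) => [[g [Gg g0]]|G0].
  have [vA' HA'] := fin_range (fun i => bW (h (inl i))) noA.
  have [vB' HB'] := fin_range (fun i => bW (h (inr i))) noB.
  apply: (@W_big g _ (catv vA' vB') Gg g0) => w Ww.
  apply: (span_inspan (S := range bW)); last exact: bWs.2.2.
  move=> _ [k _ <-]; rewrite -(hK2 k); case: (hi k) => [i|i].
    by have [j ->] := HA' i; apply: inspan_l; apply: inspan_one.
  by have [j ->] := HB' i; apply: inspan_r; apply: inspan_one.
have G0' : forall x, G x -> x = 0.
  by move=> x Gx; apply: contrapT => nx; apply: G0; exists x; split => //; apply/eqP.
have [iA _] := basis_ne bAs nA; have [iB _] := basis_ne bBs nB.
pose idx2 := fun l : 'I_2 => if l == ord0 then h (inl iA) else h (inr iB).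
have inj2 : injective idx2.
  move=> [[|[|l1]] h1] [[|[|l2]] h2] //= e; apply: val_inj => //=.
  all: try by move/(bij_inj hb): e.
have := card_bound (v := fun _ : 'I_1 => e_ 0) bWs.2.1 inj2.
by move=> /(_ (fun k => W_G0 G0' (bWs.1 k))).
Qed.

Lemma partA (A B : set (K -> K)) : direct_sum_decomp G A B ->
  nonzero_space A -> nonzero_space B ->
  (forall a1 a2 b', A a1 -> A a2 -> B b' -> forall c,
      lie_bracket (lie_bracket a1 a2) b' c = 0) ->
  (forall b1 b2 a, B b1 -> B b2 -> A a -> forall c,
      lie_bracket (lie_bracket b1 b2) a c = 0) -> False.
Proof.
move=> [[AW [_ [_ Ascal]]] [[BW [_ [_ Bscal]]] [AB sum]]] [a [Aa na]] [b [Bb nb]] HAB HBA.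
have fa := WG_fin (AW _ Aa); have fb := WG_fin (BW _ Bb).
case: (pselect (exists g, G g /\ g != 0)) => [[g [Gg g0]]|G0]; last first.
  have G0' : forall x, G x -> x = 0.
    by move=> x Gx; apply: contrapT => nx; apply: G0; exists x; split => //; apply/eqP.
  have ea : forall x, a x = a 0 * e_ 0 x.
    move=> x; have [d Hd] := W_G0 G0' (AW _ Aa); rewrite !Hd !big_ord1.
    by rewrite /e_ eqxx mulr1.
  have eb : forall x, b x = b 0 * e_ 0 x.
    move=> x; have [d Hd] := W_G0 G0' (BW _ Bb); rewrite !Hd !big_ord1.
    by rewrite /e_ eqxx mulr1.
  have a0 : a 0 != 0 by case: na => x; rewrite ea mulf_eq0 negb_or => /andP[].
  have b0 : b 0 != 0 by case: nb => x; rewrite eb mulf_eq0 negb_or => /andP[].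
  have e : (fun x => b 0 * a x) = (fun x => a 0 * b x).
    by apply: funext => x; rewrite (ea x) (eb x); ring.
  have := AB _ (Ascal (b 0) a Aa); rewrite e => /(_ (Bscal (a 0) b Bb) 0).
  by move/eqP; rewrite mulf_eq0 (negbTE a0) (negbTE b0).
case: (pselect (forall a', A a' -> exists k, forall t, a' t = k * a t)) => [HA|HA].
  apply: (@partA_half B A BW AW _ HBA b a Bb nb Aa na HA g Gg g0).
  by move=> w Ww; have [a' [b' [Aa' [Bb' Hw]]]] := sum w Ww; exists b', a'; do 2 split => //; move=> x; rewrite addrC.
have [a' [Aa' Ha']] : exists a', A a' /\ forall k, ~ (forall t, a' t = k * a t).
  apply: contrapT => H; apply: HA => a' Aa'; apply: contrapT => H2; apply: H; exists a'; split => // k Hk.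
  by apply: H2; exists k.
apply: (@partA_half A B AW BW sum HAB a b Aa na Bb nb _ g Gg g0).
move=> b' Bb'; have fb' := WG_fin (BW _ Bb').
apply: cz => //; move=> c.
have fy := br_fin fb fb'.
have hyp : forall x, A x -> (exists c, x c != 0) -> exists l, forall t, lie_bracket b b' t = l * x t.
  move=> x Ax nx; apply: cz => //; first exact: (WG_fin (AW _ Ax)).
  by move=> c'; rewrite br_antisym ?HBA ?oppr0.
have fa' := WG_fin (AW _ Aa').
have na' : exists c, a' c != 0.
  apply: contrapT => H; apply: (Ha' 0) => t; rewrite mul0r; apply/eqP; apply: contrapT => /negP H2.
  by apply: H; exists t.
have [l Hl] := hyp a Aa na; have [l' Hl'] := hyp a' Aa' na'.
case: (eqVneq l' 0) => [l0|l0]; first by rewrite Hl' l0 mul0r.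
exfalso; apply: (Ha' (l / l')) => t.
by apply: (mulfI l0); rewrite mulrA mulrCA divff // mulr1 -Hl' Hl.
Qed.
End Ord2.
End Main.

Theorem proposition3p2 (K : fieldType) (hK : [pchar K] =i pred0)
  (G : set K) (hG : is_add_subgroup G) :
  (~ exists A B : set (K -> K),
       direct_sum_decomp G A B /\ nonzero_space A /\ nonzero_space B /\
       is_zero_space (bracket_space (bracket_space A A) B) /\
       is_zero_space (bracket_space (bracket_space B B) A)) /\
  (~ exists A B : set (K -> K),
       subspace_of G A /\ subspace_of G B /\ A `<=` B /\
       nonzero_space A /\ nonzero_space B /\
       dim_sum_eq A B (WG G) /\
       is_zero_space (bracket_space (bracket_space A A) B) /\
       is_zero_space (bracket_space (bracket_space B B) A)).
Proof.
have [P [[P0 Padd] Ptot]] := exists_order hK.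
split.
  move=> [A [B [D [nA [nB [Z1 Z2]]]]]].
  apply: (partA hK hG P0 Padd Ptot D nA nB).
    exact: (zero_br3 Z1).
  exact: (zero_br3 Z2).
move=> [A [B [sA [sB [AB [nA [nB [dims [Z1 Z2]]]]]]]]].
exact: (partB hK hG P0 Padd Ptot sA sB AB nA nB dims (zero_br3 Z2)).
Qed.
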